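(* Let $a\in\mathbb N$, let $\mathfrak o$ be a compact discrete valuation ring with maximal ideal $\mathfrak p$ and residue field cardinality $q$, and $t=q^{-s}$. Let $V_{2,a}(\mathfrak o)$ be the $\mathfrak o$-representation of the star quiver $\mathsf S_a$ in which every vertex is represented by $\mathfrak o^2$ and every arrow by the identity map. Then $$\zeta_{V_{2,a}(\mathfrak o)}(s)=\sum_{r_0=0}^\infty t^{2r_0}\left(\left(\zeta_{(r_0,r_0),\mathfrak o}(s)\right)^{a-1}+(1+q^{-1})\sum_{r_1=1}^\infty(qt)^{r_1}\left(\zeta_{(r_0+r_1,r_0),\mathfrak o}(s)\right)^{a-1}\right).$$
   Context: The star quiver $\mathsf S_a$ has vertices $v_1,\dots,v_a$ and arrows $v_1\to v_j$ for $j=2,\dots,a$. Subrepresentations of a representation $(\mathcal L_\iota,f_\phi)$ are tuples of submodules $\Lambda_\iota\le\mathcal L_\iota$ with $f_\phi(\Lambda_{\mathrm{tail}(\phi)})\subseteq\Lambda_{\mathrm{head}(\phi)}$; $\zeta_V(s)=\sum_{V'}\prod_\iota|\mathcal L_\iota:\Lambda_\iota|^{-s}$ over finite-index subrepresentations. For a partition $\lambda=(\lambda_1,\lambda_2)$, $\zeta_{\lambda,\mathfrak o}(s)=\sum_U|M:U|^{-s}$ is the Dirichlet polynomial enumerating all $\mathfrak o$-submodules $U$ of the finite module $M=\mathfrak o/\mathfrak p^{\lambda_1}\times\mathfrak o/\mathfrak p^{\lambda_2}$. *)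

(* Defs.v *)
From HB Require Import structures.
From mathcomp Require Import all_boot all_order all_algebra.
From mathcomp Require Import boolp classical_sets cardinality.
Set Implicit Arguments. Unset Strict Implicit. Unset Printing Implicit Defensive.
Import Order.TTheory GRing.Theory.
Local Open Scope ring_scope.
Local Open Scope classical_set_scope.
Local Open Scope card_scope.

(* Number of elements of a set (the value is only meaningful when the  *)
(* set is finite; it is 0 otherwise).                                  *)
Definition ncard {T} (A : set T) : nat := xget 0%N [set n | A #= `I_n].

Section DVR.
Variable R : idomainType.

Definition dvdR (x y : R) : Prop := exists z, y = x * z.

(* (R, pi) is a compact DVR with uniformizer pi (maximal ideal p = pi R)
   and residue field R/p of cardinality q:
   - pi is nonzero and not a unit, every nonzero element is u * pi^k
     with u a unit (so R is a DVR with maximal ideal pi R);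
   - R / pi R has exactly q elements;
   - R is complete for the pi-adic topology.
   (A DVR is compact iff it is complete with finite residue field.) *)
Definition is_compact_dvr (pi : R) (q : nat) : Prop :=
  [/\ pi != 0, pi \notin GRing.unit,
      (forall x : R, x != 0 ->
         exists (u : R) (k : nat), u \is a GRing.unit /\ x = u * pi ^+ k),
      (exists f : 'I_q -> R,
          (forall x : R, exists i, dvdR pi (x - f i)) /\
          (forall i j, dvdR pi (f i - f j) -> i = j))
    & (forall x : nat -> R, (forall n, dvdR (pi ^+ n) (x n.+1 - x n)) ->
         exists y : R, forall n, dvdR (pi ^+ n) (y - x n))].

Definition submod (U : set (R * R)) : Prop :=
  [/\ U (0, 0),
      (forall x y, U x -> U y -> U (x.1 + y.1, x.2 + y.2))
    & (forall (r : R) x, U x -> U (r * x.1, r * x.2))].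

Definition index_is (U : set (R * R)) (k : nat) : Prop :=
  exists f : 'I_k -> R * R,
    (forall x : R * R, exists i, U (x.1 - (f i).1, x.2 - (f i).2)) /\
    (forall i j, U ((f i).1 - (f j).1, (f i).2 - (f j).2) -> i = j).

(* zeta_{lambda,o}: submodules of M = o/p^l1 x o/p^l2 are identified    *)
(* (correspondence theorem) with the submodules U of o^2 containing     *)
(* the kernel p^l1 o x p^l2 o of o^2 -> M, and |M : U| = |o^2 : U|.      *)
Definition submod_M (pi : R) (l1 l2 : nat) (U : set (R * R)) : Prop :=
  [/\ submod U, (forall x, U (pi ^+ l1 * x, 0)) & (forall y, U (0, pi ^+ l2 * y))].

(* Dirichlet series are represented by their coefficient sequences:
   D(s) = \sum_{N >= 1} D N * N^{-s}. *)
Definition dseries := nat -> rat.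

Definition zeta_lambda (pi : R) (l1 l2 : nat) : dseries :=
  fun N => (ncard [set U | submod_M pi l1 l2 U /\ index_is U N])%:R.

(* The star quiver S_a: vertices v_1..v_a are 'I_a (v_1 = vertex 0),    *)
(* arrows v_1 -> v_j for j = 2..a, encoded as pairs (tail, head).       *)
Definition star_arrows (a : nat) : seq (nat * nat) :=
  [seq (0%N, j) | j <- iota 1 a.-1].

Definition V2a_map (a : nat) (e : nat * nat) : R * R -> R * R := id.

Definition is_subrep_V2a (a : nat) (L : 'I_a -> set (R * R)) : Prop :=
  (forall i, submod (L i)) /\
  (forall i j : 'I_a, ((i : nat), (j : nat)) \in star_arrows a ->
     forall x, L i x -> L j (V2a_map a ((i : nat), (j : nat)) x)).

Definition subreps_of_index (a : nat) (N : nat) : set ('I_a -> set (R * R)) :=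
  [set L | is_subrep_V2a L /\
           exists k : 'I_a -> nat, (forall i, index_is (L i) (k i)) /\
                                   (\prod_(i < a) k i)%N = N].

Definition zeta_V2a (a : nat) : dseries :=
  fun N => (ncard (@subreps_of_index a N))%:R.
End DVR.

Arguments subreps_of_index : clear implicits.
Arguments zeta_V2a : clear implicits.
Arguments is_subrep_V2a : clear implicits.
Arguments zeta_lambda {R} pi l1 l2.

Definition dmul (f g : dseries) : dseries :=
  fun N => \sum_(d < N.+1 | (d %| N)%N) f d * g (N %/ d)%N.
Definition done_ : dseries := fun N => (N == 1%N)%:R.
Definition dpow (f : dseries) (k : nat) : dseries := iter k (dmul f) done_.
Definition dadd (f g : dseries) : dseries := fun N => f N + g N.
Definition dscale (c : rat) (f : dseries) : dseries := fun N => c * f N.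
Definition dmono (c : rat) (m : nat) : dseries := fun N => if N == m then c else 0.
(* t^k = (q^{-s})^k = (q^k)^{-s} *)
Definition tpow (q k : nat) : dseries := dmono 1 (q ^ k)%N.
(* (q t)^k = q^k (q^k)^{-s} *)
Definition qtpow (q k : nat) : dseries := dmono (q ^ k)%N%:R (q ^ k)%N.
(* It is used
   only for families F with F r N = 0 whenever r > N (true below, since
   F r is a multiple of t^r = (q^r)^{-s} and q^r > r for q >= 2), so the
   coefficient of N^{-s} is the finite sum over r0 <= r <= N. *)
Definition dsum_from (r0 : nat) (F : nat -> dseries) : dseries :=
  fun N => \sum_(r0 <= r < N.+1) F r N.

(* Main.v *)
Require Import Defs.
From HB Require Import structures.
From mathcomp Require Import all_boot all_order all_algebra.
From mathcomp Require Import boolp classical_sets cardinality.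
From mathcomp Require Import ring zify.
Import Order.TTheory GRing.Theory.
Set Implicit Arguments. Unset Strict Implicit. Unset Printing Implicit Defensive.

Local Close Scope ring_scope.
Local Close Scope classical_set_scope.
Local Close Scope card_scope.
Local Open Scope ring_scope.
Local Open Scope classical_set_scope.

Section P1.
Variables (R : idomainType) (pi : R) (q : nat).
Hypothesis hR : is_compact_dvr pi q.

Lemma pi_neq0 : pi != 0. Proof. by case: hR. Qed.
Lemma pi_nunit : pi \notin GRing.unit. Proof. by case: hR. Qed.
Lemma val_dec (x : R) : x != 0 -> exists (u : R) (k : nat), u \is a GRing.unit /\ x = u * pi ^+ k.
Proof. by case: hR => _ _ H _ _; apply: H. Qed.

Lemma dvdR_refl (x : R) : dvdR x x. Proof. by exists 1; rewrite mulr1. Qed.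
Lemma dvdR0 (x : R) : dvdR x 0. Proof. by exists 0; rewrite mulr0. Qed.
Lemma dvdRD (x y z : R) : dvdR x y -> dvdR x z -> dvdR x (y + z).
Proof. by move=> [a ->] [b ->]; exists (a + b); rewrite mulrDr. Qed.
Lemma dvdRN (x y : R) : dvdR x y -> dvdR x (- y).
Proof. by move=> [a ->]; exists (- a); rewrite mulrN. Qed.
Lemma dvdRB (x y z : R) : dvdR x y -> dvdR x z -> dvdR x (y - z).
Proof. by move=> h1 h2; apply: dvdRD => //; apply: dvdRN. Qed.
Lemma dvdRM (x y z : R) : dvdR x y -> dvdR x (z * y).
Proof. by move=> [a ->]; exists (z * a); rewrite mulrCA. Qed.
Lemma dvdRMr (x y z : R) : dvdR x y -> dvdR x (y * z).
Proof. by move=> h; rewrite mulrC; apply: dvdRM. Qed.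
Lemma dvdR_trans (x y z : R) : dvdR x y -> dvdR y z -> dvdR x z.
Proof. by move=> [a ->] [b ->]; exists (a * b); rewrite mulrA. Qed.
Lemma dvdR_mul2 (x y z w : R) : dvdR x y -> dvdR z w -> dvdR (x * z) (y * w).
Proof. by move=> [a ->] [b ->]; exists (a * b); ring. Qed.
Lemma dvdR_pow (a b : nat) : (a <= b)%N -> dvdR (pi ^+ a) (pi ^+ b).
Proof. by move=> h; exists (pi ^+ (b - a)); rewrite -exprD subnKC. Qed.
Lemma dvdR_powx (a b : nat) (x : R) : (a <= b)%N -> dvdR (pi ^+ b) x -> dvdR (pi ^+ a) x.
Proof. by move=> h; apply: dvdR_trans; apply: dvdR_pow. Qed.
Lemma dvdR_1 (x : R) : dvdR 1 x. Proof. by exists x; rewrite mul1r. Qed.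

Lemma pi_pow_neq0 n : pi ^+ n != 0. Proof. by rewrite expf_neq0 // pi_neq0. Qed.

Lemma dvdR_cancel (a : nat) (x y : R) : dvdR (pi ^+ a * x) (pi ^+ a * y) -> dvdR x y.
Proof.
move=> [z]; rewrite -mulrA => /(mulfI (pi_pow_neq0 a)) ->; by exists z.
Qed.
Lemma dvdR_cancel_pow (a b : nat) (y : R) : dvdR (pi ^+ (a + b)) (pi ^+ a * y) -> dvdR (pi ^+ b) y.
Proof. by rewrite exprD; apply: dvdR_cancel. Qed.

Lemma dvdR_unit (x y u : R) : u \is a GRing.unit -> dvdR x (u * y) -> dvdR x y.
Proof.
move=> hu [z hz]; exists (u^-1 * z); rewrite mulrCA -hz mulrA mulVr // mul1r //.
Qed.

Lemma pi_dvd1 : ~ dvdR pi 1.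
Proof.
move=> [z hz]; move/negP: pi_nunit; apply; apply/unitrP; exists z.
by rewrite mulrC -hz.
Qed.

Lemma dvd_pow_le (a b : nat) : dvdR (pi ^+ a) (pi ^+ b) -> (a <= b)%N.
Proof.
move=> h; rewrite leqNgt; apply/negP => hba.
have e : a = (b + (a - b).-1.+1)%N by rewrite prednK ?subn_gt0 // subnKC // ltnW.
move: h; rewrite e -(mulr1 (pi ^+ b)) => /dvdR_cancel_pow; rewrite exprS => h.
by apply: pi_dvd1; apply: dvdR_trans h; exists (pi ^+ (a - b).-1); rewrite mulrC.
Qed.

Lemma nonunit_dvd (x : R) : x \notin GRing.unit -> dvdR pi x.
Proof.
case: (eqVneq x 0) => [-> _|/val_dec [u [k [hu ->]]] hx]; first exact: dvdR0.
case: k hx => [|k] hx; first by move: hx; rewrite expr0 mulr1 hu.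
by apply: dvdRM; exists (pi ^+ k); rewrite exprS.
Qed.

Lemma ndvd_unit (x : R) : ~ dvdR pi x -> x \is a GRing.unit.
Proof. by move=> h; apply/negPn/negP => /nonunit_dvd. Qed.

Lemma unit_ndvd (x : R) : x \is a GRing.unit -> ~ dvdR pi x.
Proof.
move=> hx [z hz]; apply: pi_dvd1; exists (z * x^-1).
by rewrite mulrA -hz mulrV.
Qed.

Lemma one_sub_unit (z : R) : (1 - pi * z) \is a GRing.unit.
Proof.
apply: ndvd_unit => h; apply: pi_dvd1.
have -> : (1 : R) = (1 - pi * z) + pi * z by ring.
by apply: dvdRD => //; exists z.
Qed.

Lemma q_gt1 : (1 < q)%N.
Proof.
case: hR => _ _ _ [f [hf1 hf2]] _.
case: q f hf1 hf2 => [|[|q']] f hf1 hf2 //.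
  by case: (hf1 0) => [[]].
have [i1 h1] := hf1 1; have [i0 h0] := hf1 0.
have e : i1 = i0 by rewrite !ord1.
exfalso; apply: pi_dvd1; have -> : (1 : R) = (1 - f i1) - (0 - f i0) by rewrite e; ring.
exact: dvdRB.
Qed.

End P1.

Local Close Scope ring_scope.
Local Close Scope classical_set_scope.
Local Close Scope card_scope.
Local Open Scope ring_scope.
Local Open Scope classical_set_scope.

Lemma omod_lt m n (i : 'I_(m * n)) : (i %% n < n)%N.
Proof. rewrite ltn_pmod //; case: n i => [|n] [i hi] //; by rewrite muln0 in hi. Qed.
Lemma odiv_lt m n (i : 'I_(m * n)) : (i %/ n < m)%N.
Proof.
case: n i => [|n] [i hi] /=; first by rewrite muln0 in hi.
by rewrite ltn_divLR.
Qed.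
Definition omod m n (i : 'I_(m * n)) : 'I_n := Ordinal (omod_lt i).
Definition odiv m n (i : 'I_(m * n)) : 'I_m := Ordinal (odiv_lt i).
Lemma opair_lt m n (a : 'I_m) (b : 'I_n) : (a * n + b < m * n)%N.
Proof.
case: a b => a ha [b hb] /=.
apply: (@leq_trans (a * n + n)); first by rewrite ltn_add2l.
by rewrite -mulSnr leq_mul2r ha orbT.
Qed.
Definition opair m n (a : 'I_m) (b : 'I_n) : 'I_(m * n) := Ordinal (opair_lt a b).
Lemma odiv_pair m n (a : 'I_m) (b : 'I_n) : odiv (opair a b) = a.
Proof.
apply: val_inj => /=; case: b => b hb /=.
by rewrite divnMDl ?(divn_small hb) ?addn0 //; case: n hb.
Qed.
Lemma omod_pair m n (a : 'I_m) (b : 'I_n) : omod (opair a b) = b.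
Proof. by apply: val_inj => /=; rewrite modnMDl modn_small. Qed.
Lemma opair_inj m n (i j : 'I_(m * n)) : odiv i = odiv j -> omod i = omod j -> i = j.
Proof.
move=> /(congr1 val) /= h1 /(congr1 val) /= h2.
by apply: val_inj; rewrite /= (divn_eq i n) (divn_eq j n) h1 h2.
Qed.

Section P2.
Variables (R : idomainType) (pi : R) (q : nat).
Hypothesis hR : is_compact_dvr pi q.

Definition reps (l k : nat) (h : 'I_k -> R) :=
  (forall x, exists i, dvdR (pi ^+ l) (x - h i)) /\
  (forall i j, dvdR (pi ^+ l) (h i - h j) -> i = j).

Lemma reps_exist l : exists h : 'I_(q ^ l) -> R, reps l h.
Proof.
elim: l => [|l [h [h1 h2]]].
  exists (fun _ => 0); split => [x|i j _]; first by exists ord0; rewrite expr0; apply: dvdR_1.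
  by rewrite !ord1.
case: hR => _ _ _ [f [hf1 hf2]] _.
rewrite expnSr.
exists (fun i => h (odiv i) + pi ^+ l * f (omod i)); split.
  move=> x; have [i [z hz]] := h1 x; have [j [w hw]] := hf1 z.
  exists (opair i j); rewrite odiv_pair omod_pair.
  exists w; rewrite exprSr -mulrA -hw.
  by rewrite opprD addrA hz; ring.
move=> i j hij.
have hd : odiv i = odiv j.
  apply: h2.
  have -> : h (odiv i) - h (odiv j) = (h (odiv i) + pi ^+ l * f (omod i) -
     (h (odiv j) + pi ^+ l * f (omod j))) - pi ^+ l * (f (omod i) - f (omod j)) by ring.
  apply: dvdRB; first exact: (dvdR_powx (leqnSn l)).
  apply: dvdRMr; exact: dvdR_refl.
apply: opair_inj => //; apply: hf2.
move: hij; rewrite hd -[l.+1]addn1.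
have -> : h (odiv j) + pi ^+ l * f (omod i) - (h (odiv j) + pi ^+ l * f (omod j)) =
   pi ^+ l * (f (omod i) - f (omod j)) by ring.
by move/(dvdR_cancel_pow hR); rewrite expr1.
Qed.

Definition rho l : 'I_(q ^ l) -> R := projT1 (cid (reps_exist l)).
Arguments rho : clear implicits.
Lemma rhoP l : reps l (rho l). Proof. exact: (projT2 (cid (reps_exist l))). Qed.
Lemma rho_compl l x : exists i, dvdR (pi ^+ l) (x - rho l i). Proof. exact: (rhoP l).1. Qed.
Lemma rho_inj l i j : dvdR (pi ^+ l) (rho l i - rho l j) -> i = j. Proof. exact: (rhoP l).2. Qed.

End P2.
Arguments rho {R pi q} hR l.
Arguments reps {R} pi l {k} h.

Local Close Scope ring_scope.
Local Close Scope classical_set_scope.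
Local Close Scope card_scope.
Local Open Scope ring_scope.
Local Open Scope classical_set_scope.

Section P3.
Variables (R : idomainType) (pi : R) (q : nat).
Hypothesis hR : is_compact_dvr pi q.

Definition Kset (l1 l2 : nat) : set (R * R) :=
  fun v => dvdR (pi ^+ l1) v.1 /\ dvdR (pi ^+ l2) v.2.

Definition lin (m : R * R * R * R) (v : R * R) : R * R :=
  (m.1.1.1 * v.1 + m.1.1.2 * v.2, m.1.2 * v.1 + m.2 * v.2).
Definition minv (m m' : R * R * R * R) :=
  (forall v, lin m (lin m' v) = v) /\ (forall v, lin m' (lin m v) = v).

Lemma linD m v w : lin m (v.1 + w.1, v.2 + w.2) = ((lin m v).1 + (lin m w).1, (lin m v).2 + (lin m w).2).
Proof. by rewrite /lin /=; congr pair; ring. Qed.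
Lemma linB m v w : lin m (v.1 - w.1, v.2 - w.2) = ((lin m v).1 - (lin m w).1, (lin m v).2 - (lin m w).2).
Proof. by rewrite /lin /=; congr pair; ring. Qed.
Lemma linZ m r v : lin m (r * v.1, r * v.2) = (r * (lin m v).1, r * (lin m v).2).
Proof. by rewrite /lin /=; congr pair; ring. Qed.
Lemma lin0 m : lin m (0, 0) = (0, 0).
Proof. by rewrite /lin /=; congr pair; ring. Qed.

Lemma Ueq (U : set (R * R)) x y : U x -> x = y -> U y. Proof. by move=> h <-. Qed.

Lemma submodB (U : set (R * R)) x y : submod U -> U x -> U y -> U (x.1 - y.1, x.2 - y.2).
Proof.
case=> _ hD hZ hx hy; have := hD _ _ hx (hZ (-1) _ hy).
by move/Ueq; apply; rewrite /=; congr pair; ring.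
Qed.

Lemma submod_lin (U : set (R * R)) m : submod U -> submod (fun v => U (lin m v)).
Proof.
case=> h0 hD hZ; split; first by rewrite lin0.
  by move=> x y hx hy; rewrite linD; apply: hD.
by move=> r x hx; rewrite linZ; apply: hZ.
Qed.

Lemma index_lin (U : set (R * R)) m m' k : minv m m' -> index_is U k -> index_is (fun v => U (lin m' v)) k.
Proof.
move=> [i1 i2] [f [h1 h2]]; exists (fun i => lin m (f i)); split.
  move=> x; have [i hi] := h1 (lin m' x); exists i; by rewrite linB i2.
by move=> i j; rewrite linB !i2; apply: h2.
Qed.

Lemma idx_uniq (U : set (R * R)) k k' : submod U -> index_is U k -> index_is U k' -> k = k'.
Proof.
move=> hU.
suff H : forall k k', index_is U k -> index_is U k' -> (k <= k')%N.
  by move=> a b; apply/eqP; rewrite eqn_leq (H _ _ a b) (H _ _ b a).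
move=> {}k {}k' [f [f1 f2]] [g [g1 g2]].
have [phi hphi] := choice (fun i => g1 (f i)).
have : injective phi.
  move=> i j e; apply: f2.
  have := submodB hU (hphi i) (hphi j); rewrite e => /Ueq; apply.
  by simpl; congr pair; ring.
by move/leq_card; rewrite !card_ord.
Qed.

Lemma index_dir (U : set (R * R)) k (e : R * R) : submod U -> index_is U k ->
  forall x, U (pi ^+ k * x * e.1, pi ^+ k * x * e.2).
Proof.
move=> hU [f [f1 f2]].
have [phi hphi] := choice (fun j : 'I_k.+1 => f1 (pi ^+ j * e.1, pi ^+ j * e.2)).
have : ~~ injectiveb phi.
  apply/negP => /injectiveP /leq_card; rewrite !card_ord; by rewrite ltnn.
move=> /injectivePn [j1 [j2 hne heq]].
have key : forall (a b : 'I_k.+1), (a < b)%N -> phi a = phi b -> forall x, U (pi ^+ k * x * e.1, pi ^+ k * x * e.2).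
  move=> a b hab hph x.
  have hd := submodB hU (hphi a) (hphi b); rewrite hph in hd.
  set u := 1 - pi * pi ^+ (b - a).-1.
  have hu : u \is a GRing.unit by apply: (one_sub_unit hR).
  have ka : (a <= k)%N by rewrite -ltnS.
  have epb : pi ^+ b = pi ^+ a * (1 - u).
    rewrite /u opprB addrC subrK -exprS prednK ?subn_gt0 // -exprD subnKC //.
    exact: ltnW.
  have epk : pi ^+ k = pi ^+ (k - a) * pi ^+ a by rewrite -exprD (subnK ka).
  case: hU => _ _ hZ; apply: (Ueq (hZ (pi ^+ (k - a) * x * u^-1) _ hd)).
  rewrite /= epb epk; congr pair.
    transitivity (pi ^+ (k - a) * pi ^+ a * x * e.1 * (u^-1 * u)); first by ring.
    by rewrite mulVr // mulr1.
  transitivity (pi ^+ (k - a) * pi ^+ a * x * e.2 * (u^-1 * u)); first by ring.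
  by rewrite mulVr // mulr1.
case: (ltngtP j1 j2) => h.
- by apply: key h heq.
- by apply: key h (esym heq).
- by move: hne; rewrite (val_inj h) eqxx.
Qed.

Lemma index_K (U : set (R * R)) k : submod U -> index_is U k -> forall v, Kset k k v -> U v.
Proof.
move=> hU hk [v1 v2] [[a /= ha] [b /= hb]].
have A := index_dir (1, 0) hU hk a; have B := index_dir (0, 1) hU hk b.
case: hU => _ hD _; have := hD _ _ A B; move/Ueq; apply => /=.
by rewrite ha hb; simpl; congr pair; ring.
Qed.

Lemma index_pos (U : set (R * R)) k : index_is U k -> (0 < k)%N.
Proof. by case: k => // [[f [f1 _]]]; case: (f1 (0,0)) => [[]]. Qed.

Lemma Kset_mono l1 l2 n : (l1 <= n)%N -> (l2 <= n)%N -> forall v, Kset n n v -> Kset l1 l2 v.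
Proof. by move=> h1 h2 v [a b]; split; apply: dvdR_powx; eauto. Qed.

Lemma submod_K l1 l2 : submod (Kset l1 l2).
Proof.
split; first by split; apply: dvdR0.
  by move=> x y [a b] [c d]; split; apply: dvdRD.
by move=> r x [a b]; split; apply: dvdRM.
Qed.

Lemma index_Kset l1 l2 : index_is (Kset l1 l2) (q ^ l1 * q ^ l2).
Proof.
exists (fun i => (rho hR l1 (odiv i), rho hR l2 (omod i))); split.
  move=> [x y]; have [i hi] := rho_compl hR l1 x; have [j hj] := rho_compl hR l2 y.
  by exists (opair i j); rewrite odiv_pair omod_pair.
move=> i j [/= /rho_inj a /rho_inj b]; exact: opair_inj.
Qed.

End P3.

Local Close Scope ring_scope.
Local Close Scope classical_set_scope.
Local Close Scope card_scope.
Local Open Scope ring_scope.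
Local Open Scope classical_set_scope.

Section P4.
Variables (R : idomainType) (pi : R) (q : nat).
Hypothesis hR : is_compact_dvr pi q.

Definition typ (l1 l2 : nat) (L : set (R * R)) :=
  exists m m', minv m m' /\ forall v, L v <-> Kset pi l1 l2 (lin m v).

Lemma setPR (A B : set (R * R)) : (forall v, A v <-> B v) -> A = B.
Proof. by move=> h; apply: funext => v; apply: propext. Qed.

Lemma typ_submod l1 l2 L : typ l1 l2 L -> submod L.
Proof.
move=> [m [m' [_ h]]]; rewrite (setPR h); apply: submod_lin; exact: submod_K.
Qed.

Lemma typ_index l1 l2 L : typ l1 l2 L -> index_is L (q ^ l1 * q ^ l2).
Proof.
move=> [m [m' [[i1 i2] h]]]; rewrite (setPR h).
apply: (@index_lin _ _ m'); first by split.
exact: index_Kset.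
Qed.

Lemma K_lin n m v : Kset pi n n v -> Kset pi n n (lin m v).
Proof.
by move=> [a b]; split; apply: dvdRD; apply: dvdRM.
Qed.

Lemma typ_KN l1 l2 n L : typ l1 l2 L -> (l1 <= n)%N -> (l2 <= n)%N ->
  forall v, Kset pi n n v -> L v.
Proof.
move=> [m [m' [_ h]]] h1 h2 v hv; apply/h.
by apply: (Kset_mono h1 h2); apply: K_lin.
Qed.

Lemma typ_sub_level l1 l2 L : typ l1 l2 L -> (l2 <= l1)%N ->
  forall v, L v -> dvdR (pi ^+ l2) v.1 /\ dvdR (pi ^+ l2) v.2.
Proof.
move=> [m [m' [[i1 i2] h]]] hl v /h [a b].
have : Kset pi l2 l2 (lin m v) by split => //; exact: dvdR_powx a.
by move/(K_lin m'); rewrite i2.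
Qed.

Lemma typ_witness l1 l2 L : typ l1 l2 L -> exists v, L v /\
  forall k, dvdR (pi ^+ k) v.1 -> dvdR (pi ^+ k) v.2 -> (k <= l2)%N.
Proof.
move=> [m [m' [[i1 i2] h]]]; exists (lin m' (0, pi ^+ l2)); split.
  by apply/h; rewrite i1; split; [apply: dvdR0 | apply: dvdR_refl].
move=> k a b; have := K_lin m (conj a b); rewrite i1 => -[_ /= c].
exact: (dvd_pow_le hR).
Qed.

Lemma typ_uniq l1 l2 l1' l2' L : typ l1 l2 L -> typ l1' l2' L ->
  (l2 <= l1)%N -> (l2' <= l1')%N -> l1 = l1' /\ l2 = l2'.
Proof.
move=> t t' h h'.
have e2 : l2 = l2'.
  apply/eqP; rewrite eqn_leq; apply/andP; split.
    have [v [hv hk]] := typ_witness t'.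
    have [a b] := typ_sub_level t h hv; exact: hk.
  have [v [hv hk]] := typ_witness t.
  have [a b] := typ_sub_level t' h' hv; exact: hk.
split => //.
have := idx_uniq (typ_submod t) (typ_index t) (typ_index t').
rewrite -!expnD => /(expnI (q_gt1 hR)); rewrite e2 => /eqP; rewrite eqn_add2r.
by move/eqP.
Qed.

Lemma typ_char l1 l2 L : typ l1 l2 L -> (l2 <= l1)%N ->
  exists a b, ~ (dvdR pi a /\ dvdR pi b) /\
   forall v, L v <-> [/\ dvdR (pi ^+ l2) v.1, dvdR (pi ^+ l2) v.2 &
                          dvdR (pi ^+ l1) (a * v.1 + b * v.2)].
Proof.
move=> t hl; have [v0 _] := typ_witness t.
case: t => m [m' [[i1 i2] h]]; exists m.1.1.1, m.1.1.2; split.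
  move=> [ha hb]; apply: (pi_dvd1 hR).
  have := i1 (1, 0); rewrite /lin /= => -[e1 _]; rewrite -e1.
  by apply: dvdRD; apply: dvdRMr.
move=> v; split.
  move=> hv; have [a b] := typ_sub_level (ex_intro _ m (ex_intro _ m' (conj (conj i1 i2) h))) hl hv.
  by split => //; case/h: hv.
case=> a b c; apply/h; split => //=.
by apply: dvdRD; apply: dvdRM.
Qed.

Lemma typ_diag l L : typ l l L -> forall v, L v <-> Kset pi l l v.
Proof.
move=> t; have [a [b [_ h]]] := typ_char t (leqnn l).
move=> v; rewrite h; split; first by case.
move=> [c d]; split => //.
by apply: dvdRD; apply: dvdRM.
Qed.

Lemma typ_K l1 l2 : typ l1 l2 (Kset pi l1 l2).
Proof.
exists (1, 0, 0, 1), (1, 0, 0, 1); split.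
  by split => v; rewrite /lin /=; case: v => x y /=; congr pair; ring.
by move=> [x y]; rewrite /lin /= !mul1r !mul0r addr0 add0r.
Qed.

End P4.

Local Close Scope ring_scope.
Local Close Scope classical_set_scope.
Local Close Scope card_scope.
Local Open Scope ring_scope.
Local Open Scope classical_set_scope.

Section P5.
Variables (R : idomainType) (pi : R) (q : nat).
Hypothesis hR : is_compact_dvr pi q.

Lemma ideal_pow (I : set R) n : (forall r x, I x -> I (r * x)) -> I (pi ^+ n) ->
  exists e, (e <= n)%N /\ forall x, I x <-> dvdR (pi ^+ e) x.
Proof.
move=> hZ hn.
have exP : exists k, `[< I (pi ^+ k) >] by exists n; apply/asboolP.
case: (ex_minnP exP) => e /asboolP he hmin; exists e; split; first by apply: hmin; apply/asboolP.
move=> x; split; last by move=> [z ->]; rewrite mulrC; apply: hZ.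
case: (eqVneq x 0) => [-> _|/(val_dec hR) [u [k [hu ->]]] hx]; first exact: dvdR0.
have hk : (e <= k)%N.
  apply: hmin; apply/asboolP; have := hZ u^-1 _ hx; by rewrite mulrA mulVr // mul1r.
by apply: dvdRM; apply: dvdR_pow.
Qed.

Lemma typ_exist_aux (L : set (R * R)) n e1 : submod L -> (forall v, Kset pi n n v -> L v) ->
  (forall x, (exists y, L (x, y)) <-> dvdR (pi ^+ e1) x) ->
  (forall x y, L (x, y) -> dvdR (pi ^+ e1) y) ->
  exists l1 l2, [/\ (l2 <= l1)%N, (l1 <= n)%N & typ pi l1 l2 L].
Proof.
move=> hL hK h1 h2.
have [w hw] : exists w, L (pi ^+ e1, w) by apply/h1; apply: dvdR_refl.
have [w' ew] := h2 _ _ hw.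
have [e0 [he0 h0]] : exists e, (e <= n)%N /\ forall x, L (0, x) <-> dvdR (pi ^+ e) x.
  apply: ideal_pow; last by apply: hK; split; [apply: dvdR0|apply: dvdR_refl].
  case: hL => _ _ hZ r x hx; have := hZ r _ hx; by rewrite mulr0.
have le10 : (e1 <= e0)%N.
  apply: (dvd_pow_le hR); apply: (h2 0); apply/h0; exact: dvdR_refl.
exists e0, e1; split => //.
exists (- w', 1, 1, 0), (0, 1, 1, w'); split.
  by split => -[x y]; rewrite /lin /=; congr pair; ring.
case: hL => hL0 hD hZ.
move=> [x y]; rewrite /lin /Kset /=; split.
  move=> hxy; have [x' ex] := (h1 x).1 (ex_intro _ y hxy).
  have := hD _ _ hxy (hZ (- x') _ hw); rewrite /= ex.
  have -> : pi ^+ e1 * x' + - x' * pi ^+ e1 = 0 by ring.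
  move/h0 => hh; split; last by exists x'; ring.
  by move: hh; rewrite ew; congr dvdR; ring.
move=> [[z ez] [x' ex]].
have hx : x = pi ^+ e1 * x' by rewrite -ex; ring.
have hy : y = w' * x + pi ^+ e0 * z by rewrite -ez; ring.
have := hD _ _ (hZ x' _ hw) ((h0 _).2 (ex_intro _ z (erefl _))).
move/Ueq; apply => /=; rewrite hy hx ew; congr pair; ring.
Qed.

Lemma typ_exist (L : set (R * R)) n : submod L -> (forall v, Kset pi n n v -> L v) ->
  exists l1 l2, [/\ (l2 <= l1)%N, (l1 <= n)%N & typ pi l1 l2 L].
Proof.
move=> hL hK.
have hLZ := hL; case: hLZ => _ hD hZ.
have [e1 [_ he1]] : exists e, (e <= n)%N /\ forall x, (exists y, L (x, y)) <-> dvdR (pi ^+ e) x.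
  apply: ideal_pow; first by move=> r x [y hy]; exists (r * y); exact: (hZ r _ hy).
  by exists 0; apply: hK; split; [apply: dvdR_refl|apply: dvdR0].
have [e2 [_ he2]] : exists e, (e <= n)%N /\ forall y, (exists x, L (x, y)) <-> dvdR (pi ^+ e) y.
  apply: ideal_pow; first by move=> r y [x hx]; exists (r * x); exact: (hZ r _ hx).
  by exists 0; apply: hK; split; [apply: dvdR0|apply: dvdR_refl].
case: (leqP e1 e2) => he.
  apply: (typ_exist_aux hL hK he1) => x y hxy.
  apply: (dvdR_powx he); apply/he2; by exists x.
pose Ls := fun v : R * R => L (v.2, v.1).
have [l1 [l2 [a b [m [m' [[i1 i2] hm]]]]]] : exists l1 l2, [/\ (l2 <= l1)%N, (l1 <= n)%N & typ pi l1 l2 Ls].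
  apply: (@typ_exist_aux Ls n e2).
  - split; [by case: hL | by move=> x y; apply: hD | by move=> r x; apply: hZ].
  - by move=> [x y] [h1 h2]; apply: hK.
  - move=> y; rewrite -he2; split; move=> [x hx]; by exists x.
  - move=> x y hxy; apply: (dvdR_powx (ltnW he)); apply/he1; by exists x.
exists l1, l2; split => //.
exists (m.1.1.2, m.1.1.1, m.2, m.1.2), (m'.1.2, m'.2, m'.1.1.1, m'.1.1.2); split.
  split => -[x y].
    have := i1 (x, y); rewrite /lin /= => -[e1' e2'].
    by congr pair; [rewrite -[RHS]e1' | rewrite -[RHS]e2']; ring.
  have := i2 (y, x); rewrite /lin /= => -[e1' e2'].
  by congr pair; [rewrite -[RHS]e2' | rewrite -[RHS]e1']; ring.
move=> [x y]; have := hm (y, x); rewrite /Ls /lin /=.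
have -> : m.1.1.1 * y + m.1.1.2 * x = m.1.1.2 * x + m.1.1.1 * y by ring.
by have -> : m.1.2 * y + m.2 * x = m.2 * x + m.1.2 * y by ring.
Qed.

End P5.

Local Close Scope ring_scope.
Local Close Scope classical_set_scope.
Local Close Scope card_scope.
Local Open Scope ring_scope.
Local Open Scope classical_set_scope.

Section P6.
Variables (R : idomainType) (pi : R) (q : nat).
Hypothesis hR : is_compact_dvr pi q.

Definition Phi l2 r (x : 'I_(q ^ r) + 'I_(q ^ r.-1)) : set (R * R) :=
  match x with
  | inl i => fun v => [/\ dvdR (pi ^+ l2) v.1, dvdR (pi ^+ l2) v.2 &
                          dvdR (pi ^+ (l2 + r)) (v.1 + rho hR r i * v.2)]
  | inr j => fun v => [/\ dvdR (pi ^+ l2) v.1, dvdR (pi ^+ l2) v.2 &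
                          dvdR (pi ^+ (l2 + r)) (pi * rho hR r.-1 j * v.1 + v.2)]
  end.
Arguments Phi : clear implicits.

Lemma pow_split a b (x y : R) : dvdR (pi ^+ a) x -> dvdR (pi ^+ b) y -> dvdR (pi ^+ (a + b)) (x * y).
Proof. by move=> h1 h2; rewrite exprD; apply: dvdR_mul2. Qed.

Lemma phi_typ l2 r x : (0 < r)%N -> typ pi (l2 + r) l2 (Phi l2 r x).
Proof.
move=> hr; case: x => [i|j] /=.
  set t := rho hR r i.
  exists (1, t, 0, 1), (1, - t, 0, 1); split.
    by split => -[a b]; rewrite /lin /=; congr pair; ring.
  move=> [a b]; rewrite /lin /Kset /=; split.
    by move=> [h1 h2 h3]; rewrite !mul1r mul0r add0r; split.
  rewrite !mul1r mul0r add0r => -[h3 h2]; split => //.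
  have -> : a = (a + t * b) - t * b by ring.
  apply: dvdRB; last by apply: dvdRM.
  by apply: dvdR_powx h3; apply: leq_addr.
set s := pi * rho hR r.-1 j.
exists (s, 1, 1, 0), (0, 1, 1, - s); split.
  by split => -[a b]; rewrite /lin /=; congr pair; ring.
move=> [a b]; rewrite /lin /Kset /=; split.
  by move=> [h1 h2 h3]; rewrite !mul1r mul0r addr0; split.
rewrite !mul1r mul0r addr0 => -[h3 h1]; split => //.
have -> : b = (s * a + b) - s * a by ring.
apply: dvdRB; last by apply: dvdRM.
by apply: dvdR_powx h3; apply: leq_addr.
Qed.

Lemma phi_inj l2 r x y : (0 < r)%N -> (forall v, Phi l2 r x v <-> Phi l2 r y v) -> x = y.
Proof.
move=> hr; have er : r = (1 + r.-1)%N by rewrite add1n prednK.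
case: x => [i|j]; case: y => [i'|j'] h.
- pose v := (- rho hR r i * pi ^+ l2, pi ^+ l2).
  have : Phi l2 r (inl i) v.
    split; rewrite /v /=; [apply: dvdRM; apply: dvdR_refl|apply: dvdR_refl|].
    have -> : - rho hR r i * pi ^+ l2 + rho hR r i * pi ^+ l2 = 0 by ring.
    exact: dvdR0.
  move/h => -[_ _ /=].
  have -> : - rho hR r i * pi ^+ l2 + rho hR r i' * pi ^+ l2 = pi ^+ l2 * (rho hR r i' - rho hR r i) by ring.
  by move/(dvdR_cancel_pow hR)/rho_inj => ->.
- pose v := (pi ^+ l2, - (pi * rho hR r.-1 j') * pi ^+ l2).
  have : Phi l2 r (inr j') v.
    split; rewrite /v /=; [apply: dvdR_refl|apply: dvdRM; apply: dvdR_refl|].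
    have -> : pi * rho hR r.-1 j' * pi ^+ l2 + - (pi * rho hR r.-1 j') * pi ^+ l2 = 0 by ring.
    exact: dvdR0.
  move/h => -[_ _ /=].
  have -> : pi ^+ l2 + rho hR r i * (- (pi * rho hR r.-1 j') * pi ^+ l2) =
    pi ^+ l2 * (1 - pi * (rho hR r i * rho hR r.-1 j')) by ring.
  move/(dvdR_cancel_pow hR) => hdu.
  exfalso; apply: (unit_ndvd hR (one_sub_unit hR _)); have h1 := dvdR_powx hr hdu; rewrite expr1 in h1; exact: h1.
- pose v := (pi ^+ l2, - (pi * rho hR r.-1 j) * pi ^+ l2).
  have : Phi l2 r (inr j) v.
    split; rewrite /v /=; [apply: dvdR_refl|apply: dvdRM; apply: dvdR_refl|].
    have -> : pi * rho hR r.-1 j * pi ^+ l2 + - (pi * rho hR r.-1 j) * pi ^+ l2 = 0 by ring.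
    exact: dvdR0.
  move/h => -[_ _ /=].
  have -> : pi ^+ l2 + rho hR r i' * (- (pi * rho hR r.-1 j) * pi ^+ l2) =
    pi ^+ l2 * (1 - pi * (rho hR r i' * rho hR r.-1 j)) by ring.
  move/(dvdR_cancel_pow hR) => hdu.
  exfalso; apply: (unit_ndvd hR (one_sub_unit hR _)); have h1 := dvdR_powx hr hdu; rewrite expr1 in h1; exact: h1.
- pose v := (pi ^+ l2, - (pi * rho hR r.-1 j) * pi ^+ l2).
  have : Phi l2 r (inr j) v.
    split; rewrite /v /=; [apply: dvdR_refl|apply: dvdRM; apply: dvdR_refl|].
    have -> : pi * rho hR r.-1 j * pi ^+ l2 + - (pi * rho hR r.-1 j) * pi ^+ l2 = 0 by ring.
    exact: dvdR0.
  move/h => -[_ _ /=].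
  have -> : pi * rho hR r.-1 j' * pi ^+ l2 + - (pi * rho hR r.-1 j) * pi ^+ l2 =
    pi ^+ (l2 + 1) * (rho hR r.-1 j' - rho hR r.-1 j) by rewrite exprD expr1; ring.
  have ee : (l2 + r = (l2 + 1) + r.-1)%N by rewrite -addnA add1n prednK.
  by rewrite ee => /(dvdR_cancel_pow hR)/rho_inj => ->.
Qed.

Lemma phi_surj l2 r L : (0 < r)%N -> typ pi (l2 + r) l2 L ->
  exists x, forall v, L v <-> Phi l2 r x v.
Proof.
move=> hr t.
have ee : (l2 + r = 1 + (r.-1 + l2))%N by rewrite addnA add1n prednK // addnC.
have [a [b [hab h]]] := typ_char hR t (leq_addr _ _).
have [ua|na] := boolP (a \is a GRing.unit).
  have [i hi] := rho_compl hR r (a^-1 * b); exists (inl i) => v.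
  have ab : a * (a^-1 * b) = b by rewrite mulrA mulrV // mul1r.
  move: (a^-1 * b) ab hi => c ab hi.
  have hd : dvdR (pi ^+ (l2 + r)) (a * ((c - rho hR r i) * v.2)) -> True by [].
  rewrite h /=; split => -[h1 h2 h3]; split => //.
  - apply: (dvdR_unit ua).
    have -> : a * (v.1 + rho hR r i * v.2) = (a * v.1 + b * v.2) - a * ((c - rho hR r i) * v.2).
      by rewrite -ab; ring.
    by apply: dvdRB => //; apply: dvdRM; rewrite addnC; apply: pow_split.
  - have -> : a * v.1 + b * v.2 = a * (v.1 + rho hR r i * v.2) + a * ((c - rho hR r i) * v.2).
      by rewrite -ab; ring.
    by apply: dvdRD; apply: dvdRM => //; rewrite addnC; apply: pow_split.
have [s es] := nonunit_dvd hR na.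
have ub : b \is a GRing.unit.
  apply: (ndvd_unit hR) => hb; apply: hab; split => //; by exists s.
have [j hj] := rho_compl hR r.-1 (b^-1 * s); exists (inr j) => v.
have bs : b * (b^-1 * s) = s by rewrite mulrA mulrV // mul1r.
move: (b^-1 * s) bs hj => c bs hj.
have E : a * v.1 + b * v.2 = b * (pi * rho hR r.-1 j * v.1 + v.2) +
   b * (pi * ((c - rho hR r.-1 j) * v.1)).
  by rewrite es -bs; ring.
have D : dvdR (pi ^+ l2) v.1 -> dvdR (pi ^+ (l2 + r)) (b * (pi * ((c - rho hR r.-1 j) * v.1))).
  move=> h1; apply: dvdRM; rewrite ee; apply: pow_split; first by rewrite expr1; apply: dvdR_refl.
  exact: pow_split.
rewrite h /=; split => -[h1 h2 h3]; split => //.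
- apply: (dvdR_unit ub); move: h3; rewrite E => h3.
  have -> : b * (pi * rho hR r.-1 j * v.1 + v.2) = (b * (pi * rho hR r.-1 j * v.1 + v.2) +
     b * (pi * ((c - rho hR r.-1 j) * v.1))) - b * (pi * ((c - rho hR r.-1 j) * v.1)) by ring.
  by apply: dvdRB => //; apply: D.
- by rewrite E; apply: dvdRD; [apply: dvdRM|apply: D].
Qed.

End P6.
Arguments Phi {R pi q} hR l2 r x.

Local Close Scope ring_scope.
Local Close Scope classical_set_scope.
Local Close Scope card_scope.
Local Open Scope classical_set_scope.
Local Open Scope card_scope.

Definition cnt (T : finType) (P : T -> Prop) : nat := #|[pred t | `[< P t >]]|.

Lemma ncard_eq T (A : set T) k : A #= `I_k -> ncard A = k.
Proof.
move=> h; rewrite /ncard.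
have := xgetPex 0%N (ex_intro (fun n => A #= `I_n) k h) => h2.
apply/card_eq_II; apply: card_eq_trans (card_esym h2) h.
Qed.

Lemma finpred_card (T : finType) (p : pred T) : (fun x => p x : Prop) #= `I_#|p|.
Proof.
apply: (card_eq_trans _ (card_esym card_II)).
have -> : (fun x => p x : Prop) = enum_val @` [set: 'I_#|p|].
  apply/seteqP; split => x /=.
    move=> xS; exists (enum_rank_in xS x) => //; exact: enum_rankK_in.
  by move=> [i _ <-]; apply: enum_valP.
apply: inj_card_eq => i j _ _; exact: enum_val_inj.
Qed.

Lemma transfer X (T : finType) (d : T -> X) (A : set X) :
  injective d -> (forall x, A x -> exists t, d t = x) ->
  finite_set A /\ ncard A = cnt (fun t => A (d t)).
Proof.
move=> dinj hA.
pose p : pred T := [pred t | `[< A (d t) >]].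
have e : A = d @` (fun t => p t : Prop).
  apply/seteqP; split => x /=.
    move=> Ax; have [t ht] := hA x Ax; exists t => //; rewrite /p /=; apply/asboolP; by rewrite ht.
  by move=> [t] /asboolP ? <-.
have h : A #= `I_#|p|.
  rewrite e; apply: (card_eq_trans _ (finpred_card _)).
  by apply: inj_card_eq => i j _ _; apply: dinj.
by split; [exists #|p| | apply: ncard_eq].
Qed.

Local Close Scope ring_scope.
Local Close Scope classical_set_scope.
Local Close Scope card_scope.
Local Open Scope ring_scope.
Local Open Scope classical_set_scope.

Section P8.
Variables (R : idomainType) (pi : R) (q : nat).
Hypothesis hR : is_compact_dvr pi q.
Variable n : nat.

Definition Tn := {set ('I_(q ^ n) * 'I_(q ^ n))}.
Definition dec (S : Tn) : set (R * R) := fun v => exists p, p \in S /\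
   dvdR (pi ^+ n) (v.1 - rho hR n p.1) /\ dvdR (pi ^+ n) (v.2 - rho hR n p.2).
Definition enc (U : set (R * R)) : Tn := [set p | `[< U (rho hR n p.1, rho hR n p.2) >]]%SET.
Definition sat (U : set (R * R)) := forall v w, U v -> Kset pi n n w -> U (v.1 + w.1, v.2 + w.2).

Lemma enc_dec S : enc (dec S) = S.
Proof.
apply/setP => p; rewrite inE; apply/asboolP/idP.
  move=> [p' [hp' [/rho_inj h1 /rho_inj h2]]]; by rewrite (_ : p = p') //; case: p p' h1 h2 {hp'} => ? ? [? ?] /= -> ->.
move=> hp; exists p; split => //; split; rewrite subrr; exact: dvdR0.
Qed.

Lemma dec_enc U : sat U -> dec (enc U) = U.
Proof.
move=> hU; apply: funext => -[v1 v2]; apply: propext; split.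
  move=> [p [hp [/= h1 h2]]]; move: hp; rewrite inE => /asboolP hp.
  have := hU _ (v1 - rho hR n p.1, v2 - rho hR n p.2) hp (conj h1 h2).
  move/Ueq; apply => /=; congr pair; ring.
move=> hv; have [i hi] := rho_compl hR n v1; have [j hj] := rho_compl hR n v2.
exists (i, j); split => //; rewrite inE; apply/asboolP.
have := hU _ (- (v1 - rho hR n i), - (v2 - rho hR n j)) hv (conj (dvdRN hi) (dvdRN hj)).
move/Ueq; apply => /=; congr pair; ring.
Qed.

Lemma dec_sat S : sat (dec S).
Proof.
move=> v w [p [hp [h1 h2]]] [w1 w2]; exists p; split => //; split => /=.
  have -> : v.1 + w.1 - rho hR n p.1 = (v.1 - rho hR n p.1) + w.1 by ring.
  exact: dvdRD.
have -> : v.2 + w.2 - rho hR n p.2 = (v.2 - rho hR n p.2) + w.2 by ring.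
exact: dvdRD.
Qed.

Lemma decS_inj : injective dec.
Proof. by move=> S S' e; rewrite -(enc_dec S) -(enc_dec S') e. Qed.

Lemma submod_sat U : submod U -> (forall v, Kset pi n n v -> U v) -> sat U.
Proof. by case=> _ hD _ hK v w hv hw; apply: hD => //; apply: hK. Qed.

Lemma dec_pre_sat m (S : Tn) : sat (fun v => dec S (lin m v)).
Proof.
move=> v w hv hw; rewrite linD; apply: dec_sat => //.
exact: K_lin.
Qed.

Definition tau m (S : Tn) : Tn := enc (fun v => dec S (lin m v)).
Lemma dec_tau m S : dec (tau m S) = fun v => dec S (lin m v).
Proof. by rewrite /tau dec_enc //; apply: dec_pre_sat. Qed.
Lemma tauK m m' : minv m m' -> cancel (tau m') (tau m).
Proof.
move=> [i1 i2] S; apply: decS_inj; rewrite !dec_tau; apply: funext => v.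
by rewrite i2.
Qed.

End P8.

Local Close Scope ring_scope.
Local Close Scope classical_set_scope.
Local Close Scope card_scope.

Lemma cnt_sum (T : finType) (P : T -> Prop) : cnt P = \sum_t (`[< P t >] : nat).
Proof.
rewrite /cnt -sum1_card big_mkcond /=; apply: eq_bigr => t _.
by rewrite inE; case: `[< P t >].
Qed.

Lemma cnt_ext (T : finType) (P Q : T -> Prop) : (forall t, P t <-> Q t) -> cnt P = cnt Q.
Proof.
move=> h; rewrite !cnt_sum; apply: eq_bigr => t _.
by case: (asboolP (P t)) => hp; case: (asboolP (Q t)) => hq //; exfalso; [apply: hq; apply/h | apply: hp; apply/h].
Qed.

Definition fcons (T : finType) k (x : T) (M : {ffun 'I_k -> T}) : {ffun 'I_k.+1 -> T} :=
  [ffun i => if unlift ord0 i is Some j then M j else x].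
Definition ftail (T : finType) k (M : {ffun 'I_k.+1 -> T}) : {ffun 'I_k -> T} :=
  [ffun j => M (lift ord0 j)].

Lemma fcons0 (T : finType) k x (M : {ffun 'I_k -> T}) : fcons x M ord0 = x.
Proof. by rewrite ffunE unlift_none. Qed.
Lemma fconsS (T : finType) k x (M : {ffun 'I_k -> T}) j : fcons x M (lift ord0 j) = M j.
Proof. by rewrite ffunE liftK. Qed.

Lemma ffun_split (T : finType) k (F : {ffun 'I_k.+1 -> T} -> nat) :
  \sum_M F M = \sum_x \sum_(M : {ffun 'I_k -> T}) F (fcons x M).
Proof.
rewrite pair_big /=.
rewrite (reindex (fun p : T * {ffun 'I_k -> T} => fcons p.1 p.2)) //=.
exists (fun M : {ffun 'I_k.+1 -> T} => (M ord0, ftail M)) => [[x M] _|M _] /=.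
  by rewrite fcons0; congr pair; apply/ffunP => j; rewrite ffunE fconsS.
apply/ffunP => i; rewrite ffunE; case: unliftP => [j ->|->]; last by [].
by rewrite ffunE.
Qed.

Lemma cnt_split (T : finType) k (P : {ffun 'I_k.+1 -> T} -> Prop) :
  cnt P = \sum_x cnt (fun M : {ffun 'I_k -> T} => P (fcons x M)).
Proof. by rewrite cnt_sum ffun_split; apply: eq_bigr => x _; rewrite cnt_sum. Qed.

Lemma cnt_ffun0 (T : finType) (P : {ffun 'I_0 -> T} -> Prop) (b : Prop) :
  (forall M, P M <-> b) -> cnt P = `[< b >].
Proof.
move=> h; rewrite cnt_sum.
have -> : \sum_(M : {ffun 'I_0 -> T}) (`[< P M >] : nat) = \sum_(M : {ffun 'I_0 -> T}) (`[< b >] : nat).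
  apply: eq_bigr => M _; congr nat_of_bool; apply/asboolP/asboolP => /h //.
by rewrite sum_nat_const card_ffun card_ord expn0 mul1n.
Qed.

Lemma forall_split k (p : 'I_k.+1 -> Prop) : (forall i, p i) <-> p ord0 /\ forall j, p (lift ord0 j).
Proof.
split => [h|[h0 h] i]; first by split.
by case: (unliftP ord0 i) => [j ->|->].
Qed.

Local Close Scope ring_scope.
Local Close Scope classical_set_scope.
Local Close Scope card_scope.

Lemma mul_eq_iff (a p m : nat) : (0 < a)%N -> (a * p = m <-> (a %| m)%N /\ p = m %/ a)%N.
Proof.
move=> ha; split => [<-|[hd ->]]; first by rewrite dvdn_mulr // mulKn.
by rewrite mulnC divnK.
Qed.

Lemma sum_single (T : finType) (P : T -> Prop) (w : T -> nat) (G : nat -> nat) m x :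
  (0 < m)%N -> (P x -> 0 < w x)%N ->
  \sum_(d < m.+1 | (d %| m)%N) (`[< P x /\ w x = d >] * G (m %/ d))%N =
  (if `[< P x >] && (w x %| m)%N then G (m %/ w x) else 0)%N.
Proof.
move=> hm hw.
case: (asboolP (P x)) => px /=; last first.
  by apply: big1 => d _; case: asboolP => // -[].
case: (boolP (w x %| m)%N) => hd; last first.
  by apply: big1 => d hdm; case: asboolP => // -[_ e]; move: hd; rewrite e hdm.
have hle : (w x < m.+1)%N by rewrite ltnS; apply: dvdn_leq.
rewrite (bigD1 (Ordinal hle)) //=.
case: asboolP => [_|[]]; last by split.
rewrite mul1n big1 ?addn0 // => d /andP [_ hne]; case: asboolP => // -[_ e].
by move: hne; rewrite -val_eqE /= e eqxx.
Qed.

Lemma dpow_count (T : finType) (P : T -> Prop) (w : T -> nat) :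
  (forall t, P t -> 0 < w t)%N -> forall k m, (0 < m)%N ->
  dpow (fun d => (cnt (fun t => P t /\ w t = d))%:R%R) k m =
  ((cnt (fun M : {ffun 'I_k -> T} => (forall j, P (M j)) /\ (\prod_(j < k) w (M j))%N = m))%:R)%R.
Proof.
move=> hw; elim => [|k IH] m hm.
  rewrite /dpow /= /done_ (@cnt_ffun0 _ _ (1 = m)%N); last first.
    by move=> M; rewrite big_ord0; split => [[]|h] //; split => // -[].
  by case: (eqVneq m 1%N) => [->|hne]; case: asboolP => // e; rewrite e eqxx in hne.
rewrite /dpow iterS -/(dpow _ k) /dmul.
have -> : (\sum_(d < m.+1 | (d %| m)%N)
   ((cnt (fun t => P t /\ w t = d))%:R * dpow (fun d0 => (cnt (fun t => P t /\ w t = d0))%:R) k (m %/ d)%N))%R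
  = (((\sum_(d < m.+1 | (d %| m)%N) (cnt (fun t => P t /\ w t = d) *
       cnt (fun M : {ffun 'I_k -> T} => (forall j, P (M j)) /\ (\prod_(j < k) w (M j))%N = (m %/ d)%N))%N)%:R : rat))%R.
  rewrite natr_sum; apply: eq_bigr => d hd; rewrite IH ?natrM //.
  rewrite divn_gt0; first by apply: dvdn_leq.
  by case: (nat_of_ord d) hd => //; rewrite dvd0n => /eqP hm0; rewrite hm0 in hm.
congr (_%:R)%R; rewrite cnt_split.
have -> : \sum_x cnt (fun M : {ffun 'I_k -> T} => (forall j, P (fcons x M j)) /\
      (\prod_(j < k.+1) w (fcons x M j))%N = m) =
   \sum_x (if `[< P x >] && (w x %| m)%N then
        cnt (fun M : {ffun 'I_k -> T} => (forall j, P (M j)) /\ (\prod_(j < k) w (M j))%N = m %/ w x) else 0)%N.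
  apply: eq_bigr => x _.
  case: (asboolP (P x)) => px /=; last first.
    rewrite cnt_sum; apply: big1 => M _; case: asboolP => // -[/(_ ord0)]; by rewrite fcons0.
  case: (boolP (w x %| m)%N) => hd; last first.
    rewrite cnt_sum; apply: big1 => M _; case: asboolP => // -[_].
    by rewrite big_ord_recl fcons0 => /(mul_eq_iff _ _ (hw _ px)) [h _]; rewrite h in hd.
  apply: cnt_ext => M; rewrite forall_split big_ord_recl fcons0.
  rewrite (mul_eq_iff _ _ (hw _ px)).
  have -> : (\prod_(i < k) w (fcons x M (lift ord0 i)) = \prod_(i < k) w (M i))%N.
    by apply: eq_bigr => i _; congr w; exact: fconsS.
  have e : forall j : 'I_k, fcons x M (lift ord0 j) = M j by move=> j; exact: fconsS.
  split => [[[_ h1] [_ h2]]|[h1 h2]]; split => //.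
    by move=> j; rewrite -e.
  by split => // j; rewrite e.
rewrite (eq_bigr (fun x => \sum_(d < m.+1 | (d %| m)%N) (`[< P x /\ w x = d >] *
    cnt (fun M : {ffun 'I_k -> T} => (forall j, P (M j)) /\ (\prod_(j < k) w (M j))%N = m %/ d))%N)); last first.
  move=> x _; symmetry.
  exact: (@sum_single T P w (fun e => cnt (fun M : {ffun 'I_k -> T} => (forall j, P (M j)) /\ (\prod_(j < k) w (M j))%N = e)) m x hm (hw x)).
rewrite exchange_big /=; apply: eq_bigr => d _.
by rewrite -big_distrl /= cnt_sum.
Qed.

Local Close Scope ring_scope.
Local Close Scope classical_set_scope.
Local Close Scope card_scope.
Local Open Scope classical_set_scope.

Section P11.
Variables (R : idomainType) (pi : R) (q : nat).
Hypothesis hR : is_compact_dvr pi q.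
Variable N : nat.

Local Notation T := (Tn q N).
Local Notation D := (dec hR (n:=N)).

Definition ind (U : set (R * R)) : nat := xget 0%N [set k | index_is U k].
Lemma ind_spec U k : submod U -> index_is U k -> ind U = k.
Proof.
move=> hU hk; have := xgetPex 0%N (ex_intro (fun k => index_is U k) k hk).
by move=> h; apply: (idx_uniq hU h hk).
Qed.

Definition lat (S : T) := submod (D S) /\ exists k, index_is (D S) k.
Definition supP (L : set (R * R)) (S : T) := lat S /\ (forall v, L v -> D S v).
Definition Ccnt L k mm := cnt (fun M : {ffun 'I_k -> T} =>
  (forall j, supP L (M j)) /\ (\prod_(j < k) ind (D (M j)))%N = mm).

Lemma lat_pos S : lat S -> (0 < ind (D S))%N.
Proof. by move=> [h [k hk]]; rewrite (ind_spec h hk); apply: index_pos hk. Qed.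

Lemma lat_tau m m' S : minv m m' -> lat S -> lat (tau hR m' S) /\ ind (D (tau hR m' S)) = ind (D S).
Proof.
move=> hm [hs [k hk]]; rewrite /lat dec_tau.
have hs' := submod_lin m' hs; have hk' := index_lin hm hk.
split; first by split => //; exists k.
by rewrite (ind_spec hs' hk') (ind_spec hs hk).
Qed.

Lemma minv_sym (m m' : R * R * R * R) : minv m m' -> minv m' m.
Proof. by case. Qed.

Lemma Ccnt_transport L l1 l2 m m' k mm : minv m m' ->
  (forall v, L v <-> Kset pi l1 l2 (lin m v)) -> Ccnt L k mm = Ccnt (Kset pi l1 l2) k mm.
Proof.
move=> hm hL; rewrite /Ccnt !cnt_sum.
rewrite [in RHS](reindex_inj (h := fun M : {ffun 'I_k -> T} => [ffun j => tau hR m' (M j)])); last first.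
  move=> M1 M2 /ffunP e; apply/ffunP => j; have := e j; rewrite !ffunE => e'.
  by rewrite -(tauK hR hm (M1 j)) e' (tauK hR hm).
apply: eq_bigr => M _; congr nat_of_bool; apply/asboolP/asboolP.
  move=> [h1 h2]; split.
    move=> j; rewrite ffunE; have [hl hs] := h1 j; have [hl' _] := lat_tau hm hl.
    split => // v hv; rewrite dec_tau; apply: hs; apply/hL.
    by case: hm => i1 _; rewrite i1.
  rewrite -h2; apply: eq_bigr => j _; rewrite ffunE; exact: (lat_tau hm (h1 j).1).2.
move=> [h1 h2]; split.
  move=> j; have := h1 j; rewrite ffunE => -[hl hs].
  have e : M j = tau hR m (tau hR m' (M j)) by rewrite tauK.
  have [hl' _] := lat_tau (minv_sym hm) hl; rewrite -e in hl'.
  split => // v hv; have := hs (lin m v); rewrite dec_tau.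
  by case: hm => _ i2; rewrite i2; apply; apply/hL.
rewrite -h2; apply: eq_bigr => j _; rewrite ffunE.
have := h1 j; rewrite ffunE => -[hl _].
have e : M j = tau hR m (tau hR m' (M j)) by rewrite tauK.
have := (lat_tau (minv_sym hm) hl).2; by rewrite -e.
Qed.

Lemma submodM_iff l1 l2 (U : set (R * R)) :
  submod_M pi l1 l2 U <-> submod U /\ (forall v, Kset pi l1 l2 v -> U v).
Proof.
split.
  move=> [hU h1 h2]; split => // -[x y] [[a /= ->] [b /= ->]].
  case: hU => _ hD _; have := hD _ _ (h1 a) (h2 b); move/Ueq; apply => /=; congr pair; ring.
move=> [hU hK]; split => // [x|y]; apply: hK; split => /=;
  by [apply: dvdRM; apply: dvdR_refl | apply: dvdR0 | apply: dvdRMr; apply: dvdR_refl].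
Qed.

Lemma zeta_cnt l1 l2 : (l1 <= N)%N -> (l2 <= N)%N ->
  zeta_lambda pi l1 l2 = fun d => ((cnt (fun S => supP (Kset pi l1 l2) S /\ ind (D S) = d))%:R)%R.
Proof.
move=> h1 h2; apply: funext => d; rewrite /zeta_lambda.
have dinj : injective D by exact: (@decS_inj R pi q hR N).
have hr : forall U, [set U | submod_M pi l1 l2 U /\ index_is U d] U -> exists t, D t = U.
  move=> U [/submodM_iff [hs hK] _]; exists (enc hR N U); rewrite dec_enc //.
  by apply: submod_sat => // v hv; apply: hK; apply: (Kset_mono h1 h2).
have [_ ->] := transfer dinj hr.
congr (_%:R)%R; apply: cnt_ext => S /=; rewrite submodM_iff; split.
  move=> [[hs hK] hk]; split; first by split => //; split => //; exists d.
  exact: ind_spec.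
move=> [[[hs [k hk]] hK] e]; split => //; rewrite -e (ind_spec hs hk) //.
Qed.

Lemma Ccnt_dpow l1 l2 k mm : (l1 <= N)%N -> (l2 <= N)%N -> (0 < mm)%N ->
  ((Ccnt (Kset pi l1 l2) k mm)%:R)%R = dpow (zeta_lambda pi l1 l2) k mm.
Proof.
move=> h1 h2 hm; rewrite zeta_cnt // (dpow_count (P := supP (Kset pi l1 l2)) (w := fun S => ind (D S))) //.
by move=> t [hl _]; apply: lat_pos.
Qed.

End P11.

Local Close Scope ring_scope.
Local Close Scope classical_set_scope.
Local Close Scope card_scope.
Local Open Scope classical_set_scope.

Lemma star_mem a (i j : 'I_a) :
  (((i : nat), (j : nat)) \in star_arrows a) = ((i : nat) == 0%N) && (0 < j)%N.
Proof.
rewrite /star_arrows; case: i => [[|i] hi] /=.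
  rewrite (mem_map (f := fun j => (0%N, j))); last by move=> x y [].
  rewrite mem_iota; case: j => j hj /=; rewrite add1n prednK; last by case: (a) hj.
  by rewrite hj andbT.
by apply/mapP => -[x _ [e _]].
Qed.

Lemma prod_dvd k (f : 'I_k -> nat) i : (f i %| \prod_(j < k) f j)%N.
Proof. by rewrite (bigD1 i) //= dvdn_mulr. Qed.

Section P12.
Variables (R : idomainType) (pi : R) (q : nat).
Hypothesis hR : is_compact_dvr pi q.
Variable N : nat.
Hypothesis hN : (0 < N)%N.

Local Notation T := (Tn q N).
Local Notation D := (dec hR (n:=N)).
Local Notation ind := (@ind R).
Local Notation lat := (lat hR (N:=N)).

Lemma subreps_char k (L : 'I_k.+1 -> set (R * R)) :
  subreps_of_index R k.+1 N L <->
  [/\ forall i, submod (L i) /\ exists kk, index_is (L i) kk,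
      forall j : 'I_k, forall v, L ord0 v -> L (lift ord0 j) v &
      (\prod_(i < k.+1) ind (L i))%N = N].
Proof.
split.
  move=> [[hs ha] [kk [hk hp]]]; split.
  - by move=> i; split => //; exists (kk i).
  - move=> j v hv; apply: (ha ord0 (lift ord0 j)) => //.
    by rewrite star_mem /= /bump.
  - rewrite -hp; apply: eq_bigr => i _; exact: ind_spec.
move=> [h1 h2 h3]; split; first split.
- by move=> i; case: (h1 i).
- move=> i j; rewrite star_mem => /andP [/eqP hi hj] v hv.
  have ei : i = ord0 by apply: val_inj.
  case: (unliftP ord0 j) => [j' ej|ej]; last by rewrite ej in hj.
  by rewrite ej; apply: h2; rewrite -ei.
exists (fun i => ind (L i)); split => // i.
have [hs [kk hk]] := h1 i; by rewrite (ind_spec hs hk).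
Qed.

Lemma subreps_transfer k :
  finite_set (subreps_of_index R k.+1 N) /\
  ncard (subreps_of_index R k.+1 N) =
  cnt (fun M : {ffun 'I_k.+1 -> T} => subreps_of_index R k.+1 N (fun i => D (M i))).
Proof.
apply: transfer.
  move=> M1 M2 e; apply/ffunP => i; apply: (@decS_inj R pi q hR N).
  exact: (congr1 (fun f => f i) e).
move=> L hL; exists [ffun i => enc hR N (L i)]; apply: funext => i; rewrite ffunE.
have [[hs _] [kk [hk hp]]] := hL.
rewrite dec_enc //; apply: submod_sat => // v hv.
apply: (index_K hR (hs i) (hk i)).
by apply: Kset_mono hv; apply: dvdn_leq => //; rewrite -hp; apply: prod_dvd.
Qed.

Lemma step2 k :
  cnt (fun M : {ffun 'I_k.+1 -> T} => subreps_of_index R k.+1 N (fun i => D (M i))) =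
  (\sum_(x : T) (if `[< lat x >] && (ind (D x) %| N)%N then
      Ccnt hR N (D x) k (N %/ ind (D x)) else 0))%N.
Proof.
rewrite cnt_split; apply: eq_bigr => x _.
case: (asboolP (lat x)) => lx /=; last first.
  rewrite cnt_sum; apply: big1 => M _; case: asboolP => // /subreps_char [h1 _ _].
  by exfalso; apply: lx; have := h1 ord0; rewrite ffunE unlift_none.
have px := lat_pos lx.
case: (boolP (ind (D x) %| N)%N) => hd; last first.
  rewrite cnt_sum; apply: big1 => M _; case: asboolP => // /subreps_char [_ _].
  rewrite big_ord_recl fcons0 => /(mul_eq_iff _ _ px) [h _]; by rewrite h in hd.
apply: cnt_ext => M; rewrite subreps_char.
have e : forall j : 'I_k, fcons x M (lift ord0 j) = M j by move=> j; exact: fconsS.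
have -> : (\prod_(i < k.+1) ind (D (fcons x M i)) = ind (D x) * \prod_(i < k) ind (D (M i)))%N.
  by rewrite big_ord_recl fcons0; congr muln; apply: eq_bigr => i _; rewrite e.
split.
  move=> [h1 h2 /(mul_eq_iff _ _ px) [_ h3]]; split => // j; split; first by have := h1 (lift ord0 j); rewrite e.
  by move=> v hv; have := h2 j v; rewrite fcons0 e; apply.
move=> [h1 h2]; split; last by apply/(mul_eq_iff _ _ px).
- move=> i; case: (unliftP ord0 i) => [j ->|->]; first by rewrite e; case: (h1 j).
  by rewrite fcons0.
- by move=> j v; rewrite fcons0 e; case: (h1 j) => _; apply.
Qed.

End P12.

Local Close Scope ring_scope.
Local Close Scope classical_set_scope.
Local Close Scope card_scope.
Local Open Scope classical_set_scope.

Section P13.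
Variables (R : idomainType) (pi : R) (q : nat).
Hypothesis hR : is_compact_dvr pi q.
Variable N : nat.
Hypothesis hN : (0 < N)%N.

Local Notation T := (Tn q N).
Local Notation D := (dec hR (n:=N)).
Local Notation ind := (@ind R).
Local Notation lat := (lat hR (N:=N)).

Lemma lat_KN x : lat x -> forall v, Kset pi N N v -> D x v.
Proof.
move=> [[h0 _ _] _] [v1 v2] hv.
have := dec_sat h0 hv; by rewrite /= !add0r.
Qed.

Definition E k l1 l2 m := dpow (zeta_lambda pi l1 l2) k m.

Lemma step4x k x :
  (if `[< lat x >] && (ind (D x) %| N)%N then ((Ccnt hR N (D x) k (N %/ ind (D x)))%:R : rat) else 0)%R =
  (\sum_(l2 < N.+1) \sum_(r < N.+1)
     (if `[< typ pi (l2 + r) l2 (D x) >] && (q ^ (2 * l2 + r) %| N)%N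
      then E k (l2 + r) l2 (N %/ q ^ (2 * l2 + r)) else 0))%R.
Proof.
case: (asboolP (lat x)) => lx /=; last first.
  symmetry; apply: big1 => l2 _; apply: big1 => r _; case: asboolP => //= t.
  by exfalso; apply: lx; split; [apply: typ_submod t | exists (q ^ (l2 + r) * q ^ l2)%N; apply: typ_index t].
have [l1 [l2 [hl21 hl1 t]]] := typ_exist hR lx.1 (lat_KN lx).
have el1 : l1 = (l2 + (l1 - l2))%N by rewrite subnKC.
set r := (l1 - l2)%N in el1.
have hind : ind (D x) = (q ^ (2 * l2 + r))%N.
  rewrite (ind_spec lx.1 (typ_index hR t)) -expnD; congr expn; lia.
have hl2 : (l2 < N.+1)%N by rewrite ltnS; apply: leq_trans hl1.
have hr : (r < N.+1)%N by rewrite ltnS; apply: leq_trans hl1; rewrite /r leq_subr.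
rewrite (bigD1 (Ordinal hl2)) //=; rewrite [X in (_ + X)%R]big1 ?addr0; last first.
  move=> l2' /eqP hne; apply: big1 => r' _; case: asboolP => //= t'.
  have [_ e] := typ_uniq hR t t' hl21 (leq_addr _ _).
  by exfalso; apply: hne; apply: val_inj.
rewrite (bigD1 (Ordinal hr)) //=; rewrite [X in (_ + X)%R]big1 ?addr0; last first.
  move=> r' /eqP hne; case: asboolP => //= t'.
  have [e _] := typ_uniq hR t t' hl21 (leq_addr _ _).
  by exfalso; apply: hne; apply: val_inj => /=; move: e; rewrite el1 => /eqP; rewrite eqn_add2l => /eqP.
have -> : `[< typ pi (l2 + r) l2 (D x) >] by apply/asboolP; rewrite -el1.
rewrite hind /=; case: ifP => // hd.
have [m [m' [hm hL]]] := t.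
rewrite (Ccnt_transport hR N k _ hm hL) (Ccnt_dpow hR) //; first by rewrite /E -el1.
by rewrite divn_gt0 ?expn_gt0 ?(ltnW (q_gt1 hR)) //; apply: dvdn_leq.
Qed.

Lemma step4b k :
  (\sum_(x : T) (if `[< lat x >] && (ind (D x) %| N)%N then ((Ccnt hR N (D x) k (N %/ ind (D x)))%:R : rat) else 0))%R =
  (\sum_(l2 < N.+1) \sum_(r < N.+1)
     (if (q ^ (2 * l2 + r) %| N)%N
      then E k (l2 + r) l2 (N %/ q ^ (2 * l2 + r)) * (cnt (fun x : T => typ pi (l2 + r) l2 (D x)))%:R else 0))%R.
Proof.
rewrite (eq_bigr _ (fun x _ => step4x k x)) exchange_big; apply: eq_bigr => l2 _.
rewrite exchange_big; apply: eq_bigr => r _.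
case: ifP => hd.
  rewrite cnt_sum natr_sum mulr_sumr; apply: eq_bigr => x _; rewrite andbT.
  by case: asboolP => _; rewrite ?mulr1 ?mulr0.
by apply: big1 => x _; rewrite andbF.
Qed.

Definition cval r := if r == 0%N then 1%N else (q ^ r + q ^ r.-1)%N.

Lemma cnt_single (x0 : T) : cnt (fun x : T => x = x0) = 1%N.
Proof.
rewrite cnt_sum (bigD1 x0) //= big1 ?addn0; first by case: asboolP.
by move=> x /eqP hne; case: asboolP.
Qed.

Lemma step4c l2 r : (l2 + r <= N)%N -> cnt (fun x : T => typ pi (l2 + r) l2 (D x)) = cval r.
Proof.
move=> hle; have hl2 : (l2 <= N)%N by apply: leq_trans hle; apply: leq_addr.
rewrite /cval; case: eqP => [->|/eqP hr].
  rewrite -(cnt_single (enc hR N (Kset pi l2 l2))); apply: cnt_ext => x; rewrite addn0.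
  have sK : sat pi N (Kset pi l2 l2).
    apply: submod_sat; first exact: submod_K.
    by move=> v; apply: Kset_mono.
  split.
    move=> t; rewrite -(enc_dec hR x); congr enc; apply: setPR; exact: (typ_diag hR t).
  by move=> ->; rewrite dec_enc //; apply: typ_K.
have hr0 : (0 < r)%N by rewrite lt0n.
have sP : forall y, sat pi N (Phi hR l2 r y).
  move=> y; have t := phi_typ hR l2 y hr0.
  apply: submod_sat; first exact: typ_submod t.
  by apply: (typ_KN t) => //; apply: leq_trans hle; apply: leq_addr.
rewrite /cnt -[(q ^ r)%N]card_ord -[(q ^ r.-1)%N]card_ord -card_sum -(card_imset _ (f := fun y => enc hR N (Phi hR l2 r y))); last first.
  move=> y1 y2 e; apply: (@phi_inj R pi q hR l2 r y1 y2 hr0) => v.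
  by have := congr1 (dec hR (n := N)) e; rewrite !dec_enc // => ->.
apply: eq_card => x; rewrite inE; apply/asboolP/imsetP.
  move=> t; have [y hy] := phi_surj hR hr0 t; exists y => //.
  by rewrite -(enc_dec hR x); congr enc; apply: setPR.
by move=> [y _ ->]; rewrite dec_enc //; apply: phi_typ.
Qed.

End P13.

Local Close Scope ring_scope.
Local Close Scope classical_set_scope.
Local Close Scope card_scope.
Import Num.Theory.
Local Open Scope ring_scope.

Lemma dmul_mono (c : rat) m0 g M : (0 < M)%N ->
  dmul (dmono c m0) g M = if (m0 %| M)%N then c * g (M %/ m0)%N else 0.
Proof.
move=> hM; rewrite /dmul /dmono.
case: ifP => hd.
  have hle : (m0 < M.+1)%N by rewrite ltnS; apply: dvdn_leq.
  rewrite (bigD1 (Ordinal hle)) //= eqxx big1 ?addr0 // => d /andP [_ hne].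
  rewrite ifN ?mul0r //; apply: contraNneq hne => e; apply/eqP; exact: val_inj.
apply: big1 => d hdm; rewrite ifN ?mul0r //; apply/eqP => e; by move: hd; rewrite -e hdm.
Qed.

Lemma cval_eq q r : (0 < q)%N -> (0 < r)%N ->
  ((cval q r)%:R : rat) = (1 + (q%:R)^-1) * (q ^ r)%N%:R.
Proof.
move=> hq hr; rewrite /cval; case: eqP => [e|_]; first by rewrite e in hr.
have qn0 : (q%:R : rat) != 0 by rewrite pnatr_eq0 -lt0n.
case: r hr => // r _ /=.
rewrite natrD !natrX exprS mulrDl mul1r mulrA mulVf // mul1r. done.
Qed.

Unset Implicit Arguments.
Local Open Scope classical_set_scope.
Theorem proposition3p6 (R : idomainType) (pi : R) (q a : nat)
  (hR : is_compact_dvr pi q) (ha : (0 < a)%N) :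
  forall N : nat, (0 < N)%N ->
    finite_set (subreps_of_index R a N) /\
    zeta_V2a R a N =
    dsum_from 0 (fun r0 =>
      dmul (tpow q (2 * r0))
        (dadd (dpow (zeta_lambda pi r0 r0) a.-1)
              (dscale (1 + (q%:R)^-1)
                 (dsum_from 1 (fun r1 =>
                    dmul (qtpow q r1) (dpow (zeta_lambda pi (r0 + r1) r0) a.-1)))))) N.
Proof.
move=> N hN; case: a ha => [//|k] _.
have [fin hcard] := subreps_transfer hR hN k.
split => //.
have hq := q_gt1 hR; have hq0 : (0 < q)%N by apply: ltnW.
rewrite /zeta_V2a hcard step2 natr_sum.
rewrite (eq_bigr (fun x => if `[< lat hR x >] && (ind (dec hR x) %| N)%N
   then ((Ccnt hR N (dec hR x) k (N %/ ind (dec hR x)))%:R : rat) else 0)); last first.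
  by move=> x _; case: ifP.
rewrite step4b // /dsum_from big_mkord; apply: eq_bigr => l2 _ /=.
rewrite /tpow dmul_mono // mul1r.
case: (boolP (q ^ (2 * l2) %| N)%N) => hd; last first.
  apply: big1 => r _; case: ifP => // hd2; exfalso; move/negP: hd; apply.
  by apply: dvdn_trans hd2; rewrite expnD dvdn_mulr.
set N' := (N %/ q ^ (2 * l2))%N.
have hN' : (0 < N')%N by rewrite divn_gt0 ?expn_gt0 ?hq0 //; apply: dvdn_leq.
have hN'N : (N' <= N)%N by apply: leq_div.
have cnd : forall s, (q ^ (2 * l2 + s) %| N)%N = (q ^ s %| N')%N.
  by move=> s; rewrite /N' dvdn_divRL // -expnD addnC.
have dv : forall s, (N %/ q ^ (2 * l2 + s))%N = (N' %/ q ^ s)%N.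
  by move=> s; rewrite /N' expnD divnMA.
rewrite (eq_bigr (fun r : 'I_N.+1 => if (q ^ (2 * l2 + r) %| N)%N
    then E pi k (l2 + r) l2 (N %/ q ^ (2 * l2 + r)) * (cval q r)%:R else 0)); last first.
  move=> r _; case: ifP => // hdr; rewrite step4c //.
  apply: (@leq_trans (2 * l2 + r)); first by lia.
  apply: (@leq_trans (q ^ (2 * l2 + r))); first exact: ltnW (ltn_expl _ hq).
  by apply: dvdn_leq.
rewrite -(big_mkord xpredT (fun r => if (q ^ (2 * l2 + r) %| N)%N
    then E pi k (l2 + r) l2 (N %/ q ^ (2 * l2 + r)) * (cval q r)%:R else 0)).
rewrite big_nat_recl // /dadd /dscale /dsum_from.
have -> : cval q 0 = 1%N by [].
rewrite cnd dv expn0 dvd1n divn1 mulr1.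
congr (_ + _); first by rewrite /E addn0.
rewrite big_add1 /= mulr_sumr.
rewrite (big_cat_nat _ (n := N')) //= [X in (_ + X)]big1_seq ?addr0; last first.
  move=> r /andP [_]; rewrite mem_index_iota => /andP [hr1 hr2].
  case: ifP => // hdr; exfalso.
  move: hdr; rewrite cnd => /(dvdn_leq hN'); rewrite leqNgt; move/negP; apply.
  by apply: leq_trans (ltn_expl _ hq); apply: leq_trans hr1 _.
apply: eq_bigr => r _.
rewrite /qtpow dmul_mono // cnd dv.
case: ifP => _; last by rewrite mulr0.
by rewrite cval_eq // /E mulrA [_ * E _ _ _ _ _]mulrC mulrA.
Qed.
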